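(* Let $Y=C\big([B_{r-1},[B_r,[F_X^+,B_{\tau(r)}]_q]_q]_q+qc_{\tau(r)}B_{r-1}L_rK_X^{-1}\big)$ (the image of $B_{r-1}$ under $\widetilde\tau_r$). Then $YF_{r+1}-F_{r+1}Y=0$ and $YF_{n-r}-F_{n-r}Y=0$ hold in $B_{\mathbf c}$.
   Context: Let $\mathbb K$ be a field of characteristic zero, $q$ an indeterminate, $\mathbb K'$ a field extension of $\mathbb K(q^{1/2})$ containing square roots of all parameters $c_i$ below; all algebras are over $\mathbb K'$. $n\ge1$, $I=\{1,\dots,n\}$, $\mathfrak g=\mathfrak{sl}_{n+1}(\mathbb C)$, simple roots $\alpha_i$, fundamental weights $\varpi_i$, weight lattice $P$, Cartan matrix $a_{ii}=2$, $a_{ij}=-1$ if $|i-j|=1$, else $0$, form $(\alpha_i,\alpha_j)=a_{ij}$, $(\alpha_i,\varpi_j)=\delta_{ij}$. $U_q(\mathfrak g)$ is generated by $E_i,F_i,K_\mu$ ($\mu\in P$) with $K_0=1$, $K_\mu K_\lambda=K_{\mu+\lambda}$, $K_\mu E_i=q^{(\alpha_i,\mu)}E_iK_\mu$, $K_\mu F_i=q^{-(\alpha_i,\mu)}F_iK_\mu$, $E_iF_j-F_jE_i=\delta_{ij}\frac{K_i-K_i^{-1}}{q-q^{-1}}$ ($K_i=K_{\alpha_i}$), and the quantum Serre relations. $[a,b]_c=ab-cba$. Fix $r$ with $2\le r\le\lceil n/2\rceil-1$, $X=\{r+1,\dots,n-r\}$, $\tau(i)=n-i+1$ (on weights $\varpi_i\mapsto\varpi_{\tau(i)}$).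 $E_X^+=[E_{r+1},[\dots,[E_{n-r-1},E_{n-r}]_{q^{-1}}\dots]_{q^{-1}}]_{q^{-1}}$, $E_X^-=[E_{n-r},[\dots,[E_{r+2},E_{r+1}]_{q^{-1}}\dots]_{q^{-1}}]_{q^{-1}}$, $F_X^+=[F_{r+1},[\dots,[F_{n-r-1},F_{n-r}]_q\dots]_q]_q$ (equal to $E_{r+1}$, $F_{r+1}$ if $|X|=1$); $K_X=K_{r+1}\cdots K_{n-r}$; $L_i=K_iK_{\tau(i)}^{-1}$. $\mathcal M_X$ is generated by $E_j,F_j,K_j^{\pm1}$ ($j\in X$); $U^0_\Theta$ by the $K_\mu$ with $-w_X\tau(\mu)=\mu$ ($w_X$ longest element of the parabolic Weyl subgroup for $X$). Parameters $c_i\in\mathbb K(q^{1/2})^\times$ ($i\in I\setminus X$) with $c_i=c_{\tau(i)}$ for $i\notin X\cup\{r,\tau(r)\}$. $B_i=F_i-c_iE_{\tau(i)}K_i^{-1}$ for $i\in I\setminus(X\cup\{r,\tau(r)\})$, $B_r=F_r-c_r[E_X^+,E_{\tau(r)}]_{q^{-1}}K_r^{-1}$, $B_{\tau(r)}=F_{\tau(r)}-c_{\tau(r)}[E_X^-,E_r]_{q^{-1}}K_{\tau(r)}^{-1}$; $B_{\mathbf c}$ is generated by $\mathcal M_X$, $U^0_\Theta$ and the $B_i$. $C=(qc_rc_{\tau(r)})^{-1/2}$. *)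

(* Defs.v *)
From HB Require Import structures.
From mathcomp Require Import all_boot all_order all_algebra.
Set Implicit Arguments. Unset Strict Implicit. Unset Printing Implicit Defensive.
Import Order.TTheory GRing.Theory Num.Theory.
Local Open Scope ring_scope.

(* Weights of sl_{n+1}: P = (+)_{j=1..n} Z varpi_j, represented by the
   coefficient vector mu : {ffun 'I_n -> int}, where mu j is the coefficient
   of varpi_{j+1}.  Simple roots are indexed by nat i in 1..n. *)
Definition weight (n : nat) := {ffun 'I_n -> int}.

Definition cartan (i j : nat) : int :=
  if i == j then 2 else if (i == j.+1) || (j == i.+1) then -1 else 0.

Definition alpha (n i : nat) : weight n := [ffun j : 'I_n => cartan i j.+1].

(* (alpha_i, mu) for mu in P, using (alpha_i, varpi_j) = delta_ij *)
Definition pair_alpha (n i : nat) (mu : weight n) : int :=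
  \sum_(j < n) (if i == j.+1 then mu j else 0).

Definition qbr (F : fieldType) (A : algType F) (c : F) (a b : A) : A :=
  a * b - c *: (b * a).

Fixpoint nestbr (F : fieldType) (A : algType F) (c : F) (s : seq A) : A :=
  match s with
  | [::] => 0
  | [:: x] => x
  | x :: s' => qbr c x (nestbr c s')
  end.

(* Defining relations of U_q(sl_{n+1}) for a family (E_i, F_i, K_mu) in a
   F-algebra A.  E i, Fm i for i in 1..n (values outside are irrelevant). *)
Definition Uq_relations (n : nat) (F : fieldType) (q : F) (A : algType F)
  (E Fm : nat -> A) (K : weight n -> A) : Prop :=
  K 0 = 1 /\
  (forall mu la, K mu * K la = K (mu + la)) /\
  (forall mu i, (1 <= i <= n)%N ->
      K mu * E i = (q ^ pair_alpha i mu) *: (E i * K mu)) /\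
  (forall mu i, (1 <= i <= n)%N ->
      K mu * Fm i = (q ^ (- pair_alpha i mu)) *: (Fm i * K mu)) /\
  (forall i j, (1 <= i <= n)%N -> (1 <= j <= n)%N ->
      E i * Fm j - Fm j * E i =
      (if i == j then (q - q^-1)^-1 *: (K (alpha n i) - K (- alpha n i))
       else 0)) /\
  (forall i j, (1 <= i <= n)%N -> (1 <= j <= n)%N ->
      ((i == j.+1) || (j == i.+1)) ->
      E i * E i * E j - (q + q^-1) *: (E i * E j * E i) + E j * E i * E i = 0
      /\ Fm i * Fm i * Fm j - (q + q^-1) *: (Fm i * Fm j * Fm i)
         + Fm j * Fm i * Fm i = 0) /\
  (forall i j, (1 <= i <= n)%N -> (1 <= j <= n)%N ->
      (i != j) -> ~~ ((i == j.+1) || (j == i.+1)) ->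
      E i * E j = E j * E i /\ Fm i * Fm j = Fm j * Fm i).

(* x lies in the subfield K(s) of F, K embedded via iota *)
Definition in_adjoin (K F : fieldType) (iota : {rmorphism K -> F}) (s x : F) : Prop :=
  exists a b : {poly K}, (map_poly iota b).[s] != 0 /\
    x = (map_poly iota a).[s] / (map_poly iota b).[s].

Section Gens.
Variables (n r : nat) (F : fieldType) (q : F) (A : algType F)
  (E Fm : nat -> A) (K : weight n -> A) (c : nat -> F).

Definition tau (i : nat) : nat := (n - i).+1.
Definition Kinv (i : nat) : A := K (- alpha n i).
Definition Xlist : seq nat := iota r.+1 (n - r - r).
Definition EXp : A := nestbr q^-1 (map E Xlist).
Definition EXm : A := nestbr q^-1 (map E (rev Xlist)).
Definition FXp : A := nestbr q (map Fm Xlist).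
Definition KXinv : A := K (- \sum_(j <- Xlist) alpha n j).
Definition Lr : A := K (alpha n r - alpha n (tau r)).
(* B_i for i not in X u {r, tau r} *)
Definition Bgen (i : nat) : A := Fm i - c i *: (E (tau i) * Kinv i).
Definition Br : A := Fm r - c r *: (qbr q^-1 EXp (E (tau r)) * Kinv r).
Definition Btr : A :=
  Fm (tau r) - c (tau r) *: (qbr q^-1 EXm (E r) * Kinv (tau r)).
Definition Yelt (C : F) : A :=
  C *: (qbr q (Bgen r.-1) (qbr q Br (qbr q FXp Btr))
        + (q * c (tau r)) *: (Bgen r.-1 * Lr * KXinv)).
End Gens.

(* Main.v *)
Require Import Defs.
From HB Require Import structures.
From mathcomp Require Import all_boot all_order all_algebra.
From mathcomp Require Import zify ring lra.
Import GRing.Theory.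
Local Open Scope ring_scope.

Section NC.
Variables (F : fieldType) (A : algType F).
Inductive nexp := NAt of nat | N0 | N1 | NAdd of nexp & nexp | NOpp of nexp
  | NScale of F & nexp | NMul of nexp & nexp.
Variable env : seq A.
Definition atm i := nth 0 env i.
Fixpoint ni (e : nexp) : A :=
  match e with
  | NAt i => atm i | N0 => 0 | N1 => 1
  | NAdd a b => ni a + ni b | NOpp a => - ni a | NScale k a => k *: ni a
  | NMul a b => ni a * ni b end.
Fixpoint wpl (acc : A) (w : seq nat) : A :=
  match w with [::] => acc | j :: w' => wpl (acc * atm j) w' end.
Definition wprod (w : seq nat) : A :=
  match w with [::] => 1 | i :: w' => wpl (atm i) w' end.
Lemma wpl_mul acc w : wpl acc w = acc * wprod w.
Proof.
elim: w acc => [|j w IH] acc /=; first by rewrite mulr1.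
by rewrite !IH mulrA.
Qed.
Lemma wprod_cons i w : wprod (i :: w) = atm i * wprod w.
Proof. by rewrite /= wpl_mul. Qed.
Lemma wprod_cat u v : wprod (u ++ v) = wprod u * wprod v.
Proof. elim: u => [|i u IH]; first by rewrite mul1r. by rewrite cat_cons !wprod_cons IH mulrA. Qed.

Definition mono := (F * seq nat)%type.
Fixpoint pint (p : seq mono) : A :=
  match p with [::] => 0 | m :: p' => m.1 *: wprod m.2 + pint p' end.
Lemma pint_cat p1 p2 : pint (p1 ++ p2) = pint p1 + pint p2.
Proof. by elim: p1 => [|m p IH] /=; rewrite ?add0r // IH addrA. Qed.
Fixpoint pscale (k : F) (p : seq mono) : seq mono :=
  match p with [::] => [::] | m :: p' => (k * m.1, m.2) :: pscale k p' end.
Lemma pint_scale k p : pint (pscale k p) = k *: pint p.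
Proof. by elim: p => [|m p IH] /=; rewrite ?scaler0 // IH scalerDr scalerA. Qed.
Fixpoint pmulm (m : mono) (p : seq mono) : seq mono :=
  match p with [::] => [::] | m' :: p' => (m.1 * m'.1, m.2 ++ m'.2) :: pmulm m p' end.
Lemma pint_mulm m p : pint (pmulm m p) = m.1 *: wprod m.2 * pint p.
Proof.
elim: p => [|m' p IH] /=; first by rewrite mulr0.
by rewrite IH mulrDr wprod_cat; congr (_ + _); rewrite -scalerAl -scalerAr scalerA.
Qed.
Fixpoint pmul (p1 p2 : seq mono) : seq mono :=
  match p1 with [::] => [::] | m :: p1' => pmulm m p2 ++ pmul p1' p2 end.
Lemma pint_mul p1 p2 : pint (pmul p1 p2) = pint p1 * pint p2.
Proof. elim: p1 => [|m p IH] /=; first by rewrite mul0r. by rewrite pint_cat IH pint_mulm mulrDl. Qed.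
Fixpoint norm (e : nexp) : seq mono :=
  match e with
  | NAt i => [:: (1, [:: i])] | N0 => [::] | N1 => [:: (1, [::])]
  | NAdd a b => norm a ++ norm b | NOpp a => pscale (-1) (norm a)
  | NScale k a => pscale k (norm a) | NMul a b => pmul (norm a) (norm b) end.
Lemma normP e : pint (norm e) = ni e.
Proof.
elim: e => [i| | |a IHa b IHb|a IHa|k a IHa|a IHa b IHb] /=.
- by rewrite scale1r addr0 /atm.
- done.
- by rewrite scale1r addr0.
- by rewrite pint_cat IHa IHb.
- by rewrite pint_scale IHa scaleN1r.
- by rewrite pint_scale IHa.
- by rewrite pint_mul IHa IHb.
Qed.

Fixpoint prefix (l w : seq nat) : option (seq nat) :=
  match l, w with
  | [::], _ => Some w
  | i :: l', j :: w' => if Nat.eqb i j then prefix l' w' else None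
  | _, _ => None end.
Lemma prefixP l w v : prefix l w = Some v -> w = l ++ v.
Proof.
elim: l w => [|i l IH] w /=; first by case=> <-.
case: w => [|j w] //=.
by case: PeanoNat.Nat.eqb_spec => // -> /IH ->.
Qed.
Fixpoint find_sub (l w : seq nat) : option (seq nat * seq nat) :=
  match prefix l w with
  | Some v => Some ([::], v)
  | None => match w with
            | [::] => None
            | j :: w' => match find_sub l w' with Some (u, v) => Some (j :: u, v) | None => None end
            end end.
Lemma find_subP l w u v : find_sub l w = Some (u, v) -> w = u ++ l ++ v.
Proof.
elim: w u v => [|j w IH] u v /=.
- case E: (prefix l [::]) => [v'|] //= h.
  case: h => <- <-; exact: prefixP E.
- case E: (prefix l (j :: w)) => [v'|] /=.
    by case=> <- <-; exact: prefixP E.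
  case E2: (find_sub l w) => [[u' v']|] // h.
  case: h => <- <-; by rewrite (IH _ _ E2).
Qed.
Definition rule := (seq nat * nexp)%type.
Fixpoint valid (rs : seq rule) : Prop :=
  match rs with [::] => True | r :: rs' => wprod r.1 = ni r.2 /\ valid rs' end.
Fixpoint subst (c : F) (u v : seq nat) (p : seq mono) : seq mono :=
  match p with [::] => [::] | m :: p' => (c * m.1, u ++ m.2 ++ v) :: subst c u v p' end.
Lemma pint_subst c u v p : pint (subst c u v p) = c *: (wprod u * pint p * wprod v).
Proof.
elim: p => [|m p IH] /=; first by rewrite mulr0 mul0r scaler0.
rewrite IH !wprod_cat mulrDr mulrDl scalerDr; congr (_ + _).
by rewrite -scalerA -scalerAr -scalerAl mulrA.
Qed.
Fixpoint app_rules (rs : seq rule) (m : mono) : option (seq mono) :=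
  match rs with
  | [::] => None
  | r :: rs' => match find_sub r.1 m.2 with
                | Some (u, v) => Some (subst m.1 u v (norm r.2))
                | None => app_rules rs' m end end.
Lemma app_rulesP rs m p : valid rs -> app_rules rs m = Some p -> pint p = m.1 *: wprod m.2.
Proof.
elim: rs => [|r rs IH] //= [hr hv].
case E: (find_sub r.1 m.2) => [[u v]|]; last exact: IH.
case=> <-; rewrite pint_subst normP -hr [in RHS](find_subP _ _ _ _ E) !wprod_cat.
by rewrite mulrA.
Qed.
Fixpoint step (rs : seq rule) (p : seq mono) : seq mono :=
  match p with
  | [::] => [::]
  | m :: p' => match app_rules rs m with
               | Some p1 => p1 ++ step rs p'
               | None => m :: step rs p' end end.
Lemma stepP rs p : valid rs -> pint (step rs p) = pint p.
Proof.
move=> hv; elim: p => [|m p IH] //=.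
case E: (app_rules rs m) => [p1|] /=; last by rewrite IH.
by rewrite pint_cat IH (app_rulesP _ _ _ hv E).
Qed.
Fixpoint iter_step (n : nat) rs p := match n with 0 => p | n'.+1 => iter_step n' rs (step rs p) end.
Lemma iter_stepP n rs p : valid rs -> pint (iter_step n rs p) = pint p.
Proof. move=> hv; elim: n p => [|n IH] p //=. by rewrite IH stepP. Qed.

Fixpoint weq (u v : seq nat) : bool :=
  match u, v with
  | [::], [::] => true
  | i :: u', j :: v' => Nat.eqb i j && weq u' v'
  | _, _ => false end.
Lemma weqP u v : weq u v -> u = v.
Proof.
elim: u v => [|i u IH] [|j v] //= /andP[].
by case: PeanoNat.Nat.eqb_spec => // -> _ /IH ->.
Qed.
Fixpoint ins (m : mono) (acc : seq mono) : seq mono :=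
  match acc with
  | [::] => [:: m]
  | m' :: acc' => if weq m.2 m'.2 then (m'.1 + m.1, m'.2) :: acc' else m' :: ins m acc' end.
Lemma pint_ins m acc : pint (ins m acc) = m.1 *: wprod m.2 + pint acc.
Proof.
elim: acc => [|m' acc IH] /=; first done.
case: ifP => [/weqP ->|_] /=.
- by rewrite scalerDl addrA [_ *: _ + _]addrC.
- by rewrite IH addrCA.
Qed.
Fixpoint collect (p : seq mono) (acc : seq mono) : seq mono :=
  match p with [::] => acc | m :: p' => collect p' (ins m acc) end.
Lemma pint_collect p acc : pint (collect p acc) = pint p + pint acc.
Proof. elim: p acc => [|m p IH] acc /=; first by rewrite add0r. by rewrite IH pint_ins addrCA addrA. Qed.
Fixpoint allz (p : seq mono) : Prop :=
  match p with [::] => True | m :: p' => m.1 = 0 /\ allz p' end.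
Lemma allzP p : allz p -> pint p = 0.
Proof. by elim: p => [|m p IH] //= [-> /IH ->]; rewrite scale0r addr0. Qed.

Lemma nc_main fuel rs e1 e2 : valid rs ->
  allz (collect (iter_step fuel rs (norm (NAdd e1 (NOpp e2)))) [::]) -> ni e1 = ni e2.
Proof.
move=> hv /allzP; rewrite pint_collect addr0 iter_stepP // normP /= => /eqP.
by rewrite subr_eq0 => /eqP.
Qed.
End NC.
Arguments NAt {F}. Arguments N0 {F}. Arguments N1 {F}. Arguments NAdd {F}. Arguments NOpp {F}.
Arguments NScale {F}. Arguments NMul {F}.
Arguments ni {F A}. Arguments wprod {F A}. Arguments valid {F A}.

Ltac nc_find_idx x l := lazymatch l with
  | cons ?y ?l' =>
    let b := constr:(ltac:(first [unify x y; exact true | exact false]) : bool) in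
    lazymatch b with
    | true => constr:(0%N)
    | false => let k := nc_find_idx x l' in constr:(k.+1) end end.
Ltac nc_inlist x l := lazymatch l with
  | nil => constr:(false)
  | cons ?y ?l' =>
    let b := constr:(ltac:(first [unify x y; exact true | exact false]) : bool) in
    lazymatch b with
    | true => constr:(true)
    | false => nc_inlist x l' end end.
Ltac nc_collect t env := lazymatch t with
  | GRing.add ?a ?b => let env1 := nc_collect a env in nc_collect b env1
  | GRing.mul ?a ?b => let env1 := nc_collect a env in nc_collect b env1
  | GRing.opp ?a => nc_collect a env
  | GRing.scale ?k ?a => nc_collect a env
  | GRing.zero => env
  | GRing.one => env
  | _ => let b := nc_inlist t env in
         lazymatch b with true => env | false => constr:(t :: env) end
  end.
Ltac nc_reify t env := lazymatch t with
  | GRing.add ?a ?b => let ea := nc_reify a env in let eb := nc_reify b env in open_constr:(NAdd ea eb)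
  | GRing.mul ?a ?b => let ea := nc_reify a env in let eb := nc_reify b env in open_constr:(NMul ea eb)
  | GRing.opp ?a => let ea := nc_reify a env in open_constr:(NOpp ea)
  | GRing.scale ?k ?a => let ea := nc_reify a env in open_constr:(NScale k ea)
  | GRing.zero => open_constr:(@N0 _)
  | GRing.one => open_constr:(@N1 _)
  | _ => let i := nc_find_idx t env in open_constr:(@NAt _ i)
  end.
Ltac nc_word t env := lazymatch t with
  | GRing.mul ?a ?b => let wa := nc_word a env in let i := nc_find_idx b env in constr:(wa ++ [:: i])
  | _ => let i := nc_find_idx t env in constr:([:: i])
  end.
(* goal: H1 -> ... -> Hk -> l = r, each Hi : word = rhs *)
Ltac nc_env_hyps G env := lazymatch G with
  | (@eq _ ?l ?r) -> ?G' => let env1 := nc_collect l env in let env2 := nc_collect r env1 in nc_env_hyps G' env2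
  | @eq _ ?l ?r => let env1 := nc_collect l env in nc_collect r env1
  end.
Ltac nc_rules G env := lazymatch G with
  | (@eq _ ?l ?r) -> ?G' =>
     let w := nc_word l env in let er := nc_reify r env in let rs := nc_rules G' env in
     open_constr:((w, er) :: rs)
  | _ => open_constr:(@nil _)
  end.
Ltac nc_concl g := lazymatch g with _ -> ?g' => nc_concl g' | _ => g end.
Ltac fside := repeat (apply/andP; split); assumption.
Ltac nc_fin := repeat split; field; try fside; try done.
Ltac nc_solve_fuel fuel :=
  lazymatch goal with |- ?G =>
  let C := nc_concl G in
  lazymatch C with @eq ?T ?l ?r =>
    let env := nc_env_hyps G (@nil T) in
    let rs := nc_rules G env in
    let el := nc_reify l env in let er := nc_reify r env in
    intros;
    change (ni env el = ni env er);
    apply: (@nc_main _ _ env fuel rs el er);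
    [ cbv [valid]; repeat (first [exact I | split | assumption])
    | cbv [allz collect ins weq iter_step step app_rules find_sub prefix subst norm pscale pmul pmulm cat fst snd Nat.eqb andb];
      nc_fin ]
  end end.
Ltac nc_solve := nc_solve_fuel 40%N.
Ltac nc_debug :=
  lazymatch goal with |- ?G =>
  let C := nc_concl G in
  lazymatch C with @eq ?T ?l ?r =>
    let env := nc_env_hyps G (@nil T) in
    let rs := nc_rules G env in
    let el := nc_reify l env in let er := nc_reify r env in
    intros;
    change (ni env el = ni env er);
    apply: (@nc_main _ _ env 40%N rs el er);
    [ cbv [valid]; repeat (first [exact I | split | assumption])
    | cbv [allz collect ins weq iter_step step app_rules find_sub prefix subst norm pscale pmul pmulm cat fst snd Nat.eqb andb];
      idtac "ENV" env ]
  end end.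



Definition csum (s i l : nat) : int := \sum_(t <- iota i l) cartan s t.
Definition csf (s i l : nat) : int :=
  (if ((i <= s) && (s < i + l))%N then 2 else 0) - (if ((i <= s.+1) && (s.+1 < i + l))%N then 1 else 0)
  - (if ((0 < s) && (i <= s.-1) && (s.-1 < i + l))%N then 1 else 0).
Lemma csumE s i l : csum s i l = csf s i l.
Proof.
rewrite /csum /csf; elim: l => [|l IH].
  rewrite big_nil addn0.
  by case: ifP => h1; case: ifP => h2; case: ifP => h3 //; lia.
rewrite -addn1 iotaD big_cat big_seq1 IH /cartan.
by repeat case: ifP => /= ?; try lia.
Qed.

Set Implicit Arguments. Unset Strict Implicit.

Section Abs.
Variables (F : fieldType) (A : algType F) (q : F).
Hypothesis hq : q != 0.
Hypothesis hqq : q * q - 1 != 0.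
Hypothesis hqp : q * q + 1 != 0.
Local Notation k := ((q - q^-1)^-1).
Implicit Types x y z w r : A.

Lemma qbr_assoc c x y z : x * z = z * x -> qbr c (qbr c x y) z = qbr c x (qbr c y z).
Proof using hq hqq hqp. rewrite /qbr; nc_solve. Qed.
Lemma comm_qbr c x y z : x * y = y * x -> x * z = z * x -> x * qbr c y z = qbr c y z * x.
Proof using hq hqq hqp. rewrite /qbr; nc_solve. Qed.
Lemma cm_qbr c x y z : (qbr c x y) * z - z * (qbr c x y) =
  qbr c (x * z - z * x) y + qbr c x (y * z - z * y).
Proof using hq hqq hqp. rewrite /qbr; nc_solve. Qed.
Lemma SL_lift c x y z : x * x * y = (q + q^-1) *: (x * y * x) - y * x * x -> x * z = z * x ->
  x * x * (qbr c y z) = (q + q^-1) *: (x * (qbr c y z) * x) - (qbr c y z) * x * x.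
Proof using hq hqq hqp. rewrite /qbr; nc_solve. Qed.
Lemma SL_q x y : x * x * y = (q + q^-1) *: (x * y * x) - y * x * x ->
  x * qbr q x y = q^-1 *: (qbr q x y * x).
Proof using hq hqq hqp. rewrite /qbr; nc_solve. Qed.
Lemma SL_qr x y : x * x * y = (q + q^-1) *: (x * y * x) - y * x * x ->
  x * qbr q y x = q *: (qbr q y x * x).
Proof using hq hqq hqp. rewrite /qbr; nc_solve. Qed.
Lemma Fint x y R : y * y * x = (q + q^-1) *: (y * x * y) - x * y * y ->
  y * R * y = (q + q^-1)^-1 *: (y * y * R + R * y * y) -> R * x = x * R ->
  y * qbr q x (qbr q y R) = qbr q x (qbr q y R) * y.
Proof using hq hqq hqp. rewrite /qbr; nc_solve. Qed.
Lemma AL_L5 e f r Kp Km : e * f = f * e + k *: (Kp - Km) -> r * f = f * r ->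
  Kp * r = q^-1 *: (r * Kp) -> Km * r = q *: (r * Km) ->
  qbr q^-1 e r * f - f * qbr q^-1 e r = - (r * Km).
Proof using hq hqq hqp. rewrite /qbr; nc_solve. Qed.
Lemma AL_L3 e y Km : e * y = y * e -> Km * e = q *: (e * Km) -> qbr q^-1 e (- (y * Km)) = 0.
Proof using hq hqq hqp. rewrite /qbr; nc_solve. Qed.
Lemma AL_ORTH x F0 F1 R y Kt : x * F0 = F0 * x -> x * F1 = F1 * x - y * Kt -> x * R = R * x ->
  Kt * R = q^-1 *: (R * Kt) -> Kt * F0 = q^-1 *: (F0 * Kt) -> y * F0 = F0 * y -> R * F0 = F0 * R ->
  x * qbr q F0 (qbr q F1 R) = qbr q F0 (qbr q F1 R) * x.
Proof using hq hqq hqp. rewrite /qbr; nc_solve. Qed.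
Lemma AL_ORTH1 x F0 F1 y Kt : x * F0 = F0 * x -> x * F1 = F1 * x - y * Kt ->
  Kt * F0 = q^-1 *: (F0 * Kt) -> y * F0 = F0 * y ->
  x * qbr q F0 F1 = qbr q F0 F1 * x.
Proof using hq hqq hqp. rewrite /qbr; nc_solve. Qed.
Lemma AL_G P2 Ka W0 Fp y Kb : P2 * Fp = Fp * P2 - y * Kb -> Ka * Fp = q^-1 *: (Fp * Ka) ->
  W0 * Fp = q *: (Fp * W0) -> y * W0 = W0 * y -> Kb * W0 = q *: (W0 * Kb) ->
  Ka * W0 = q^-1 *: (W0 * Ka) -> Ka * y = y * Ka -> Kb * Ka = Ka * Kb -> y * Fp = Fp * y ->
  Kb * Fp = (q * q) *: (Fp * Kb) ->
  qbr q (P2 * Ka) W0 * Fp = Fp * qbr q (P2 * Ka) W0.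
Proof using hq hqq hqp. rewrite /qbr; nc_solve. Qed.
End Abs.

Section Abs2.
Variables (F : fieldType) (A : algType F) (q : F).
Hypothesis hq : q != 0.
Hypothesis hqq : q * q - 1 != 0.
Hypothesis hqp : q * q + 1 != 0.
Local Notation k := ((q - q^-1)^-1).
Lemma AL_L1 (a b c d Kt Kti Ks Ksi : A) :
  a * c = c * a -> b * d = d * b ->
  a * d = d * a + k *: (Kt - Kti) -> b * c = c * b + k *: (Ks - Ksi) ->
  Kt * b = q^-1 *: (b * Kt) -> Kti * b = q *: (b * Kti) ->
  Kt * c = q *: (c * Kt) -> Kti * c = q^-1 *: (c * Kti) ->
  Ks * a = q^-1 *: (a * Ks) -> Ksi * a = q *: (a * Ksi) ->
  Ks * d = q *: (d * Ks) -> Ksi * d = q^-1 *: (d * Ksi) ->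
  Kt * Ks = Ks * Kt -> Kti * Ks = Ks * Kti -> Kt * Ksi = Ksi * Kt -> Kti * Ksi = Ksi * Kti ->
  qbr q^-1 a b * qbr q c d - qbr q c d * qbr q^-1 a b = k *: (Ks * Kt - Ksi * Kti).
Proof using hq hqq hqp. rewrite /qbr; nc_solve. Qed.
Lemma ser_rw (a b c : A) : a - b + c = 0 -> a = b - c.
Proof. by move=> h; apply/eqP; rewrite -subr_eq0 -h opprB addrA addrAC. Qed.
Lemma cm_rw (a b c : A) : a - b = c -> a = b + c.
Proof. by move=> <-; rewrite addrC subrK. Qed.
Lemma ser_inv (y R : A) : y * y * R = (q + q^-1) *: (y * R * y) - R * y * y ->
  y * R * y = (q + q^-1)^-1 *: (y * y * R + R * y * y).
Proof using hq hqp.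
move=> h; rewrite h subrK scalerA mulVf ?scale1r //.
have -> : q + q^-1 = (q * q + 1) / q by field.
by rewrite mulf_neq0 // invr_eq0.
Qed.
End Abs2.

Section Abs3.
Variables (F : fieldType) (A : algType F) (q : F).
Hypothesis hq : q != 0.
Lemma qinv_rw (x y z : A) : qbr q^-1 x y = z -> y * x = q *: (x * y) - q *: z.
Proof using hq.
rewrite /qbr => <-; rewrite scalerBr scalerA mulfV // scale1r; by rewrite opprB addrC subrK.
Qed.
Lemma kc1 (x y : A) : x * y = 1 *: (y * x) -> y * x = x * y.
Proof. by rewrite scale1r => ->. Qed.
Lemma kc1' (x y : A) : x * y = 1 *: (y * x) -> x * y = y * x.
Proof. by rewrite scale1r. Qed.
Lemma qF_rw (x y : A) : x * y = q^-1 *: (y * x) -> y * x = q *: (x * y).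
Proof using hq. by move=> ->; rewrite scalerA mulfV // scale1r. Qed.
End Abs3.


Lemma cartanC i j : cartan i j = cartan j i.
Proof. rewrite /cartan; by repeat case: ifP => /= ?; try lia. Qed.

Section Uq.
Variables (Fk : fieldType) (q : Fk) (A : algType Fk) (n : nat)
  (E Fm : nat -> A) (K : weight n -> A).
Hypothesis hq : q != 0.
Hypothesis hqq : q * q - 1 != 0.
Hypothesis hqp : q * q + 1 != 0.
Hypothesis hU : Uq_relations q E Fm K.
Local Notation k := ((q - q^-1)^-1).
Local Notation al := (alpha n).
Definition cm (x y : A) := x * y - y * x.

Lemma K0 : K 0 = 1. Proof. by case: hU. Qed.
Lemma KK mu la : K mu * K la = K (mu + la). Proof. by case: hU => _ []. Qed.
Lemma KKC mu la : K mu * K la = K la * K mu. Proof. by rewrite !KK addrC. Qed.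
Lemma KE mu i : (1 <= i <= n)%N -> K mu * E i = q ^ pair_alpha i mu *: (E i * K mu).
Proof. by case: hU => _ [] _ [] h _; apply: h. Qed.
Lemma KF mu i : (1 <= i <= n)%N -> K mu * Fm i = q ^ (- pair_alpha i mu) *: (Fm i * K mu).
Proof. by case: hU => _ [] _ [] _ [] h _; apply: h. Qed.
Lemma EFd i : (1 <= i <= n)%N -> E i * Fm i = Fm i * E i + k *: (K (al i) - K (- al i)).
Proof.
move=> hi; case: hU => _ [] _ [] _ [] _ [] h _.
by move: (h i i hi hi); rewrite eqxx => <-; rewrite addrC subrK.
Qed.
Lemma EFn i j : (1 <= i <= n)%N -> (1 <= j <= n)%N -> i != j -> E i * Fm j = Fm j * E i.
Proof.
move=> hi hj hij; case: hU => _ [] _ [] _ [] _ [] h _.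
by move: (h i j hi hj); rewrite (negPf hij) => /eqP; rewrite subr_eq0 => /eqP.
Qed.
Lemma SerreE i j : (1 <= i <= n)%N -> (1 <= j <= n)%N -> (i == j.+1) || (j == i.+1) ->
  E i * E i * E j - (q + q^-1) *: (E i * E j * E i) + E j * E i * E i = 0.
Proof. by move=> hi hj hij; case: hU => _ [] _ [] _ [] _ [] _ [] h _; case: (h i j hi hj hij). Qed.
Lemma SerreF i j : (1 <= i <= n)%N -> (1 <= j <= n)%N -> (i == j.+1) || (j == i.+1) ->
  Fm i * Fm i * Fm j - (q + q^-1) *: (Fm i * Fm j * Fm i) + Fm j * Fm i * Fm i = 0.
Proof. by move=> hi hj hij; case: hU => _ [] _ [] _ [] _ [] _ [] h _; case: (h i j hi hj hij). Qed.
Lemma EEc i j : (1 <= i <= n)%N -> (1 <= j <= n)%N -> (i.+1 < j)%N || (j.+1 < i)%N -> E i * E j = E j * E i.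
Proof.
move=> hi hj hij; case: hU => _ [] _ [] _ [] _ [] _ [] _ h.
case: (h i j hi hj) => //; [apply/eqP|apply/negP]; lia.
Qed.
Lemma FFc i j : (1 <= i <= n)%N -> (1 <= j <= n)%N -> (i.+1 < j)%N || (j.+1 < i)%N -> Fm i * Fm j = Fm j * Fm i.
Proof.
move=> hi hj hij; case: hU => _ [] _ [] _ [] _ [] _ [] _ h.
case: (h i j hi hj) => //; [apply/eqP|apply/negP]; lia.
Qed.

Lemma pairD i (mu la : weight n) : pair_alpha i (mu + la) = pair_alpha i mu + pair_alpha i la.
Proof. rewrite /pair_alpha -big_split /=; apply: eq_bigr => j _; rewrite ffunE; by case: ifP; rewrite ?addr0. Qed.
Lemma pairN i (mu : weight n) : pair_alpha i (- mu) = - pair_alpha i mu.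
Proof. rewrite /pair_alpha -sumrN; apply: eq_bigr => j _; rewrite ffunE; by case: ifP; rewrite ?oppr0. Qed.
Lemma pair0 i : pair_alpha i (0 : weight n) = 0.
Proof. rewrite /pair_alpha big1 // => j _; rewrite ffunE; by case: ifP. Qed.
Lemma pair_sum i (s : seq nat) (f : nat -> weight n) :
  pair_alpha i (\sum_(j <- s) f j) = \sum_(j <- s) pair_alpha i (f j).
Proof. elim: s => [|j s IH]; rewrite ?big_nil ?pair0 // !big_cons pairD IH //. Qed.
Lemma pair_al i j : (1 <= i <= n)%N -> pair_alpha i (al j) = cartan j i.
Proof.
move=> /andP[h1 h2]; rewrite /pair_alpha.
have hi : (i.-1 < n)%N by lia.
rewrite (bigD1 (Ordinal hi)) //= big1 ?addr0.
  by rewrite ifT ?ffunE /=; [congr cartan; lia| apply/eqP; lia].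
move=> t /eqP ht; case: ifP => // /eqP hti; case: ht; apply: val_inj => /=; lia.
Qed.

Definition kcz (mu : weight n) (x : A) (z : int) := K mu * x = q ^ z *: (x * K mu).
Lemma kcz_mul mu x y z1 z2 : kcz mu x z1 -> kcz mu y z2 -> kcz mu (x * y) (z1 + z2).
Proof.
rewrite /kcz => h1 h2; rewrite mulrA h1 -scalerAl -[x * K mu * y]mulrA h2 -scalerAr scalerA expfzDr //.
by rewrite mulrA.
Qed.
Lemma kcz_add mu x y z : kcz mu x z -> kcz mu y z -> kcz mu (x + y) z.
Proof. by rewrite /kcz => h1 h2; rewrite mulrDr h1 h2 mulrDl scalerDr. Qed.
Lemma kcz_scale mu x z c : kcz mu x z -> kcz mu (c *: x) z.
Proof. by rewrite /kcz => h; rewrite -scalerAr h -scalerAl !scalerA mulrC. Qed.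
Lemma kcz_opp mu x z : kcz mu x z -> kcz mu (- x) z.
Proof. by rewrite /kcz => h; rewrite mulrN h mulNr scalerN. Qed.
Lemma kcz_qbr mu c x y z1 z2 : kcz mu x z1 -> kcz mu y z2 -> kcz mu (qbr c x y) (z1 + z2).
Proof.
move=> h1 h2; rewrite /qbr; apply: kcz_add; first exact: kcz_mul.
by apply/kcz_opp/kcz_scale; rewrite addrC; apply: kcz_mul.
Qed.
Lemma kcz_nest mu c (f : nat -> A) (g : nat -> int) s :
  (forall t, t \in s -> kcz mu (f t) (g t)) ->
  kcz mu (nestbr c (map f s)) (\sum_(t <- s) g t).
Proof.
elim: s => [|t s IH] h /=.
  by rewrite big_nil /kcz mulr0 mul0r scaler0.
rewrite big_cons; case: s IH h => [|t' s] IH h /=.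
  by rewrite big_nil addr0; apply: h; rewrite mem_seq1.
apply: kcz_qbr; first by apply: h; rewrite mem_head.
by apply: IH => u hu; apply: h; rewrite in_cons hu orbT.
Qed.
Lemma kcz_E mu i : (1 <= i <= n)%N -> kcz mu (E i) (pair_alpha i mu).
Proof. exact: KE. Qed.
Lemma kcz_F mu i : (1 <= i <= n)%N -> kcz mu (Fm i) (- pair_alpha i mu).
Proof. exact: KF. Qed.
Lemma kcz_K mu la : kcz mu (K la) 0.
Proof. by rewrite /kcz expr0z scale1r KKC. Qed.
Lemma kczE mu x z s : kcz mu x z -> q ^ z = s -> K mu * x = s *: (x * K mu).
Proof. by rewrite /kcz => -> ->. Qed.
Lemma kcz_eq mu x z z' : kcz mu x z -> z = z' -> kcz mu x z'.
Proof. by move=> h <-. Qed.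

Lemma qz0 : q ^ (0 : int) = 1. Proof. exact: expr0z. Qed.
Lemma qz1 : q ^ (1 : int) = q. Proof. exact: expr1z. Qed.
Lemma qzN1 : q ^ (-1 : int) = q^-1. Proof. exact: exprN1. Qed.
Lemma qz2 : q ^ (2 : int) = q * q. Proof. by rewrite -exprnP expr2. Qed.
Lemma qzN2 : q ^ (-2 : int) = (q * q)^-1. Proof. by rewrite -invr_expz qz2. Qed.

Lemma comm_nest c (x : A) (f : nat -> A) s :
  (forall t, t \in s -> x * f t = f t * x) -> x * nestbr c (map f s) = nestbr c (map f s) * x.
Proof.
elim: s => [|t s IH] h /=; first by rewrite mulr0 mul0r.
case: s IH h => [|t' s] IH h /=; first by apply: h; rewrite mem_seq1.
apply: (comm_qbr hq hqq hqp); first by apply: h; rewrite mem_head.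
by apply: IH => u hu; apply: h; rewrite in_cons hu orbT.
Qed.

Definition EC i l := nestbr q^-1 (map E (iota i l)).
Definition FC i l := nestbr q (map Fm (iota i l)).
Definition EM i l := nestbr q^-1 (map E (rev (iota i l))).
Lemma EC1 i : EC i 1 = E i. Proof. by []. Qed.
Lemma ECS i l : EC i l.+2 = qbr q^-1 (E i) (EC i.+1 l.+1). Proof. by []. Qed.
Lemma FC1 i : FC i 1 = Fm i. Proof. by []. Qed.
Lemma FCS i l : FC i l.+2 = qbr q (Fm i) (FC i.+1 l.+1). Proof. by []. Qed.
Lemma EM1 i : EM i 1 = E i. Proof. by []. Qed.
Lemma EMS i l : EM i l.+2 = qbr q^-1 (E (i + l.+1)) (EM i l.+1).
Proof.
rewrite /EM -addn1 iotaD rev_cat /= -/(iota i l.+1).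
rewrite -addn1 iotaD rev_cat /=; by [].
Qed.

Ltac cs_tac := rewrite ?csumE /csf; repeat (case: ifP => /= ?); try lia.

Lemma comm_F_EC j i l : (1 <= j <= n)%N -> (0 < i)%N -> (i + l <= n.+1)%N -> ~~ (i <= j < i + l)%N ->
  Fm j * EC i l = EC i l * Fm j.
Proof.
move=> hj hi hl hji; apply: comm_nest => t; rewrite mem_iota => ht.
apply/esym/EFn => //; [lia| apply/eqP; lia].
Qed.
Lemma comm_F_EM j i l : (1 <= j <= n)%N -> (0 < i)%N -> (i + l <= n.+1)%N -> ~~ (i <= j < i + l)%N ->
  Fm j * EM i l = EM i l * Fm j.
Proof.
move=> hj hi hl hji; apply: comm_nest => t; rewrite mem_rev mem_iota => ht.
apply/esym/EFn => //; [lia| apply/eqP; lia].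
Qed.
Lemma comm_E_FC j i l : (1 <= j <= n)%N -> (0 < i)%N -> (i + l <= n.+1)%N -> ~~ (i <= j < i + l)%N ->
  E j * FC i l = FC i l * E j.
Proof.
move=> hj hi hl hji; apply: comm_nest => t; rewrite mem_iota => ht.
apply/EFn => //; [lia| apply/eqP; lia].
Qed.
Lemma comm_E_EC j i l : (1 <= j <= n)%N -> (0 < i)%N -> (i + l <= n.+1)%N -> (j.+1 < i)%N || (i + l < j)%N ->
  E j * EC i l = EC i l * E j.
Proof.
move=> hj hi hl hji; apply: comm_nest => t; rewrite mem_iota => ht.
apply/EEc => //; lia.
Qed.
Lemma comm_F_FC j i l : (1 <= j <= n)%N -> (0 < i)%N -> (i + l <= n.+1)%N -> (j.+1 < i)%N || (i + l < j)%N ->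
  Fm j * FC i l = FC i l * Fm j.
Proof.
move=> hj hi hl hji; apply: comm_nest => t; rewrite mem_iota => ht.
apply/FFc => //; lia.
Qed.

Lemma sum_pair_al s i l : (0 < i)%N -> (i + l <= n.+1)%N ->
  \sum_(t <- iota i l) pair_alpha t (al s) = csum s i l.
Proof.
move=> hi hl; rewrite /csum big_seq_cond [RHS]big_seq_cond; apply: eq_bigr => t.
rewrite andbT mem_iota => ht; apply: pair_al; lia.
Qed.
Lemma sum_pairN (mu : weight n) s : \sum_(t <- s) pair_alpha t (- mu) = - \sum_(t <- s) pair_alpha t mu.
Proof. rewrite -sumrN; apply: eq_bigr => t _; exact: pairN. Qed.

Lemma kcz_EC mu i l : (0 < i)%N -> (i + l <= n.+1)%N ->
  kcz mu (EC i l) (\sum_(t <- iota i l) pair_alpha t mu).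
Proof. move=> hi hl; apply: kcz_nest => t; rewrite mem_iota => ht; apply: kcz_E; lia. Qed.
Lemma kcz_EM mu i l : (0 < i)%N -> (i + l <= n.+1)%N ->
  kcz mu (EM i l) (\sum_(t <- iota i l) pair_alpha t mu).
Proof.
move=> hi hl; rewrite -big_rev; apply: kcz_nest => t; rewrite mem_rev mem_iota => ht; apply: kcz_E; lia.
Qed.
Lemma kcz_FC mu i l : (0 < i)%N -> (i + l <= n.+1)%N ->
  kcz mu (FC i l) (- \sum_(t <- iota i l) pair_alpha t mu).
Proof.
move=> hi hl; rewrite -sumrN; apply: kcz_nest => t; rewrite mem_iota => ht; apply: kcz_F; lia.
Qed.

Lemma EC_al s i l z : (0 < i)%N -> (i + l <= n.+1)%N -> csum s i l = z -> kcz (al s) (EC i l) z.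
Proof. by move=> hi hl hz; apply: kcz_eq (kcz_EC _ hi hl) _; rewrite sum_pair_al. Qed.
Lemma EC_alN s i l z : (0 < i)%N -> (i + l <= n.+1)%N -> csum s i l = - z -> kcz (- al s) (EC i l) z.
Proof. by move=> hi hl hz; apply: kcz_eq (kcz_EC _ hi hl) _; rewrite sum_pairN sum_pair_al // hz opprK. Qed.
Lemma EM_al s i l z : (0 < i)%N -> (i + l <= n.+1)%N -> csum s i l = z -> kcz (al s) (EM i l) z.
Proof. by move=> hi hl hz; apply: kcz_eq (kcz_EM _ hi hl) _; rewrite sum_pair_al. Qed.
Lemma EM_alN s i l z : (0 < i)%N -> (i + l <= n.+1)%N -> csum s i l = - z -> kcz (- al s) (EM i l) z.
Proof. by move=> hi hl hz; apply: kcz_eq (kcz_EM _ hi hl) _; rewrite sum_pairN sum_pair_al // hz opprK. Qed.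
Lemma FC_al s i l z : (0 < i)%N -> (i + l <= n.+1)%N -> csum s i l = - z -> kcz (al s) (FC i l) z.
Proof. by move=> hi hl hz; apply: kcz_eq (kcz_FC _ hi hl) _; rewrite sum_pair_al // hz opprK. Qed.
Lemma FC_alN s i l z : (0 < i)%N -> (i + l <= n.+1)%N -> csum s i l = z -> kcz (- al s) (FC i l) z.
Proof. by move=> hi hl hz; apply: kcz_eq (kcz_FC _ hi hl) _; rewrite sum_pairN sum_pair_al // hz opprK. Qed.
Lemma E_al s i z : (1 <= i <= n)%N -> cartan s i = z -> kcz (al s) (E i) z.
Proof. by move=> hi hz; apply: kcz_eq (kcz_E _ hi) _; rewrite pair_al. Qed.
Lemma E_alN s i z : (1 <= i <= n)%N -> cartan s i = - z -> kcz (- al s) (E i) z.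
Proof. by move=> hi hz; apply: kcz_eq (kcz_E _ hi) _; rewrite pairN pair_al // hz opprK. Qed.
Lemma F_al s i z : (1 <= i <= n)%N -> cartan s i = - z -> kcz (al s) (Fm i) z.
Proof. by move=> hi hz; apply: kcz_eq (kcz_F _ hi) _; rewrite pair_al // hz opprK. Qed.
Lemma F_alN s i z : (1 <= i <= n)%N -> cartan s i = z -> kcz (- al s) (Fm i) z.
Proof. by move=> hi hz; apply: kcz_eq (kcz_F _ hi) _; rewrite pairN pair_al // hz opprK. Qed.

Lemma qbr0l c (y : A) : qbr c 0 y = 0. Proof. by rewrite /qbr mul0r mulr0 scaler0 subr0. Qed.
Lemma qbr0r c (y : A) : qbr c y 0 = 0. Proof. by rewrite /qbr mul0r mulr0 scaler0 subr0. Qed.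
Lemma cmE (x y : A) : cm x y = x * y - y * x. Proof. by []. Qed.

Lemma L5 i l : (0 < i)%N -> (i + l.+2 <= n.+1)%N ->
  cm (EC i l.+2) (Fm i) = - (EC i.+1 l.+1 * K (- al i)).
Proof.
move=> hi hl; rewrite cmE ECS; apply: (AL_L5 hq hqq hqp).
- by apply: EFd; lia.
- apply/esym/comm_F_EC; lia.
- apply: kczE qzN1; apply: EC_al; try lia; cs_tac.
- apply: kczE qz1; apply: EC_alN; try lia; cs_tac.
Qed.

Lemma L3 i l t : (0 < i)%N -> (i + l <= n.+1)%N -> (i < t)%N -> (t.+1 < i + l)%N ->
  cm (EC i l) (Fm t) = 0.
Proof.
elim: l i => [|l IH] i hi hl h1 h2; first lia.
case: l IH hl h2 => [|[|l]] IH hl h2; try lia.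
rewrite cmE ECS (cm_qbr hq hqq hqp).
have -> : E i * Fm t - Fm t * E i = 0 by rewrite EFn ?subrr //; [lia|lia|apply/eqP; lia].
rewrite qbr0l add0r.
case: (eqVneq t i.+1) => [->|ht].
- rewrite -cmE L5; try lia.
  apply: (AL_L3 hq hqq hqp); first by apply: comm_E_EC; lia.
  apply: kczE qz1; apply: E_alN; [lia|]; rewrite /cartan; do ! case: ifP => /= ?; lia.
- by rewrite -cmE IH ?qbr0r //; lia.
Qed.

Lemma FSL i l : (0 < i)%N -> (i + l.+2 <= n.+1)%N ->
  Fm i * Fm i * FC i.+1 l.+1 = (q + q^-1) *: (Fm i * FC i.+1 l.+1 * Fm i) - FC i.+1 l.+1 * Fm i * Fm i.
Proof.
move=> hi hl; case: l hl => [|l] hl.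
  rewrite FC1; apply: ser_rw; apply: SerreF; lia.
rewrite FCS; apply: (SL_lift hq hqq hqp).
  apply: ser_rw; apply: SerreF; lia.
apply: comm_F_FC; lia.
Qed.
Lemma FLq i l : (0 < i)%N -> (i + l.+2 <= n.+1)%N ->
  Fm i * FC i l.+2 = q^-1 *: (FC i l.+2 * Fm i).
Proof. move=> hi hl; rewrite FCS; apply: (SL_q hq hqq hqp); apply: FSL; lia. Qed.

Lemma FI i l t : (0 < i)%N -> (i + l <= n.+1)%N -> (i < t)%N -> (t.+1 < i + l)%N ->
  Fm t * FC i l = FC i l * Fm t.
Proof.
elim: l i => [|l IH] i hi hl h1 h2; first lia.
case: l IH hl h2 => [|[|l]] IH hl h2; try lia.
rewrite FCS.
case: (eqVneq t i.+1) => [->|ht].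
- rewrite FCS; apply: (Fint hq hqq hqp).
  + apply: ser_rw; apply: SerreF; lia.
  + apply: (ser_inv hq hqp); apply: FSL; lia.
  + apply/esym/comm_F_FC; lia.
- apply: (comm_qbr hq hqq hqp); first by apply: FFc; lia.
  apply: IH; lia.
Qed.

Lemma cm0 (x y : A) : cm x y = 0 -> x * y = y * x.
Proof. by move/eqP; rewrite subr_eq0 => /eqP. Qed.
Lemma cm_to (x y z : A) : cm x y = z -> x * y = y * x + z.
Proof. exact: cm_rw. Qed.

Lemma ORTH i l : (0 < i)%N -> (i + l.+3 <= n.+1)%N ->
  EC i.+1 l.+2 * FC i l.+2 = FC i l.+2 * EC i.+1 l.+2.
Proof.
move=> hi hl; rewrite FCS.
have hx0 : EC i.+1 l.+2 * Fm i = Fm i * EC i.+1 l.+2 by apply/esym/comm_F_EC; lia.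
have hx1 : EC i.+1 l.+2 * Fm i.+1 = Fm i.+1 * EC i.+1 l.+2 - EC i.+2 l.+1 * K (- al i.+1).
  by apply: cm_to; apply: L5; lia.
have hK0 : K (- al i.+1) * Fm i = q^-1 *: (Fm i * K (- al i.+1)).
  by apply: kczE qzN1; apply: F_alN; [lia|]; rewrite /cartan; do ! case: ifP => /= ?; lia.
have hy0 : EC i.+2 l.+1 * Fm i = Fm i * EC i.+2 l.+1 by apply/esym/comm_F_EC; lia.
case: l hl hx0 hx1 hy0 => [|l] hl hx0 hx1 hy0.
  rewrite FC1; exact: (AL_ORTH1 hq hqq hqp hx0 hx1 hK0 hy0).
rewrite FCS; apply: (AL_ORTH hq hqq hqp hx0 hx1) => //.
- apply: comm_nest => t; rewrite mem_iota => ht; apply: cm0; apply: L3; lia.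
- apply: kczE qzN1; apply: FC_alN; try lia; cs_tac.
- apply/esym/comm_F_FC; lia.
Qed.

Lemma ECr i l : (0 < i)%N -> (i + l.+2 <= n.+1)%N ->
  qbr q^-1 (EC i l.+1) (E (i + l.+1)) = EC i l.+2.
Proof.
elim: l i => [|l IH] i hi hl; first by rewrite EC1 addn1.
rewrite ECS (qbr_assoc hq hqq hqp); last by apply: EEc; lia.
by rewrite -addSnnS IH //; lia.
Qed.
Lemma FCr i l : (0 < i)%N -> (i + l.+2 <= n.+1)%N ->
  qbr q (FC i l.+1) (Fm (i + l.+1)) = FC i l.+2.
Proof.
elim: l i => [|l IH] i hi hl; first by rewrite FC1 addn1.
rewrite FCS (qbr_assoc hq hqq hqp); last by apply: FFc; lia.
by rewrite -addSnnS IH //; lia.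
Qed.
Lemma EMr i l : (0 < i)%N -> (i + l.+2 <= n.+1)%N ->
  qbr q^-1 (EM i.+1 l.+1) (E i) = EM i l.+2.
Proof.
elim: l => [|l IH] hi hl; first by rewrite EM1 EMS EM1 addn1.
rewrite EMS (qbr_assoc hq hqq hqp); last by apply: EEc; lia.
by rewrite IH ?EMS ?addSnnS //; lia.
Qed.

Lemma pair_chain j i l : (1 <= j <= n)%N -> pair_alpha j (\sum_(t <- iota i l) al t) = csum j i l.
Proof.
move=> hj; rewrite pair_sum /csum; apply: eq_bigr => t _; by rewrite pair_al // cartanC.
Qed.

Lemma L1 i l : (0 < i)%N -> (i + l.+1 <= n.+1)%N ->
  cm (EM i l.+1) (FC i l.+1) = k *: (K (\sum_(t <- iota i l.+1) al t) - K (- \sum_(t <- iota i l.+1) al t)).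
Proof.
move=> hi; elim: l => [|l IH] hl.
  by rewrite EM1 FC1 cmE big_seq1 EFd 1?addrAC ?subrr ?add0r //; lia.
rewrite EMS -FCr //.
have -> : \sum_(t <- iota i l.+2) al t = \sum_(t <- iota i l.+1) al t + al (i + l.+1).
  by rewrite -addn1 iotaD big_cat /= big_seq1.
rewrite -KK opprD -KK cmE.
set top := (i + l.+1)%N.
have htop : (1 <= top <= n)%N by rewrite /top; lia.
apply: (AL_L1 hq hqq hqp).
- apply: comm_E_FC; rewrite /top; lia.
- apply/esym/comm_F_EM; rewrite /top; lia.
- exact: EFd.
- apply: cm_to; apply: IH; lia.
- apply: kczE qzN1; apply: EM_al; try lia; rewrite /top; cs_tac.
- apply: kczE qz1; apply: EM_alN; try lia; rewrite /top; cs_tac.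
- apply: kczE qz1; apply: FC_al; try lia; rewrite /top; cs_tac.
- apply: kczE qzN1; apply: FC_alN; try lia; rewrite /top; cs_tac.
- apply: kczE qzN1; apply: kcz_eq (kcz_E _ htop) _; rewrite pair_chain //; rewrite /top; cs_tac.
- apply: kczE qz1; apply: kcz_eq (kcz_E _ htop) _; rewrite pairN pair_chain //; rewrite /top; cs_tac.
- apply: kczE qz1; apply: kcz_eq (kcz_F _ htop) _; rewrite pair_chain //; rewrite /top; cs_tac.
- apply: kczE qzN1; apply: kcz_eq (kcz_F _ htop) _; rewrite pairN opprK pair_chain //; rewrite /top; cs_tac.
- exact: KKC.
- exact: KKC.
- exact: KKC.
- exact: KKC.
Qed.

Lemma iotaSr (i l : nat) : iota i l.+1 = iota i l ++ [:: (i + l)%N].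
Proof. by rewrite -addn1 iotaD. Qed.
Lemma csum_norm i l : \sum_(t <- iota i l.+1) csum t i l.+1 = 2.
Proof.
elim: l => [|l IH]; first by rewrite big_seq1; cs_tac.
have hs : forall t, csum t i l.+2 = csum t i l.+1 + cartan t (i + l.+1).
  by move=> t; rewrite /csum (iotaSr i l.+1) big_cat big_seq1.
rewrite (eq_bigr _ (fun t _ => hs t)) big_split.
have -> : \sum_(t <- iota i l.+2) csum t i l.+1 = 2 + csum (i + l.+1) i l.+1.
  by rewrite (iotaSr i l.+1) big_cat big_seq1 IH.
have -> : \sum_(t <- iota i l.+2) cartan t (i + l.+1) = csum (i + l.+1) i l.+2.
  by rewrite /csum; apply: eq_bigr => t _; rewrite cartanC.
have -> : csum (i + l.+1) i l.+1 = -1 by cs_tac.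
have -> : csum (i + l.+1) i l.+2 = 1 by cs_tac.
by [].
Qed.

Section Top.
Variables (a m : nat).
Hypothesis ha : (2 <= a)%N.
Hypothesis han : (a + m + 3 <= n)%N.
Local Notation b := (a + m.+2)%N.
Local Notation KXw := (\sum_(t <- iota a.+1 m.+1) al t).

Lemma pair_KXw j : (1 <= j <= n)%N -> pair_alpha j KXw = csum j a.+1 m.+1.
Proof. exact: pair_chain. Qed.

Lemma Ustep : qbr q (FC a.+1 m.+1) (qbr q^-1 (EM a.+1 m.+1) (E a) * K (- al b))
  = E a * K (- KXw) * K (- al b).
Proof.
have h1 := cm_to (L1 (i:=a.+1) (l:=m) (ltn0Sn a) ltac:(lia)).
have h2 : E a * FC a.+1 m.+1 = FC a.+1 m.+1 * E a by apply: comm_E_FC; lia.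
have h3 : K (- al b) * FC a.+1 m.+1 = q^-1 *: (FC a.+1 m.+1 * K (- al b)).
  by apply: kczE qzN1; apply: FC_alN; try lia; cs_tac.
have h4 : K KXw * E a = q^-1 *: (E a * K KXw).
  by apply: kczE qzN1; apply: kcz_eq (kcz_E _ _) _; [lia|]; rewrite pair_KXw; [cs_tac|lia].
have h5 : K (- KXw) * E a = q *: (E a * K (- KXw)).
  by apply: kczE qz1; apply: kcz_eq (kcz_E _ _) _; [lia|]; rewrite pairN pair_KXw; [cs_tac|lia].
move: h1 h2 h3 h4 h5; rewrite /qbr; nc_solve.
Qed.

Lemma ZFQ : qbr q (Fm a) (qbr q (FC a.+1 m.+1) (qbr q^-1 (EM a.+1 m.+1) (E a) * K (- al b)))
  = - (k *: (K (al a) - K (- al a)) * K (- KXw) * K (- al b)).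
Proof.
rewrite Ustep.
have h1 : E a * Fm a = Fm a * E a + k *: (K (al a) - K (- al a)) by apply: EFd; lia.
have h2 : K (- KXw) * Fm a = q^-1 *: (Fm a * K (- KXw)).
  by apply: kczE qzN1; apply: kcz_eq (kcz_F _ _) _; [lia|]; rewrite pairN opprK pair_KXw; [cs_tac|lia].
have h3 : K (- al b) * Fm a = 1 *: (Fm a * K (- al b)).
  by apply: kczE qz0; apply: F_alN; [lia|]; rewrite /cartan; do ! case: ifP => /= ?; lia.
move: h1 h2 h3; rewrite /qbr; nc_solve.
Qed.

Lemma sumKX_P : \sum_(t <- iota a.+1 m.+2) pair_alpha t (- KXw) = -1.
Proof.
rewrite sum_pairN.
have -> : \sum_(t <- iota a.+1 m.+2) pair_alpha t KXw = \sum_(t <- iota a.+1 m.+2) csum t a.+1 m.+1.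
  rewrite big_seq_cond [RHS]big_seq_cond; apply: eq_bigr => t; rewrite andbT mem_iota => ht.
  apply: pair_KXw; lia.
rewrite (iotaSr a.+1 m.+1) big_cat big_seq1 csum_norm.
have -> : csum (a.+1 + m.+1) a.+1 m.+1 = -1 by cs_tac.
by [].
Qed.

Lemma ZPQ : qbr q (EC a.+1 m.+2 * K (- al a)) (E a * K (- KXw) * K (- al b))
  = - (q^-1 *: (EC a m.+3 * K (- al a) * K (- KXw) * K (- al b))).
Proof.
rewrite [EC a m.+3]ECS.
have h1 : K (- al a) * E a = (q * q)^-1 *: (E a * K (- al a)).
  by apply: kczE qzN2; apply: E_alN; [lia|]; rewrite /cartan eqxx.
have h2 : K (- KXw) * EC a.+1 m.+2 = q^-1 *: (EC a.+1 m.+2 * K (- KXw)).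
  by apply: kczE qzN1; apply: kcz_eq (kcz_EC _ _ _) sumKX_P; lia.
have h3 : K (- al b) * EC a.+1 m.+2 = q^-1 *: (EC a.+1 m.+2 * K (- al b)).
  by apply: kczE qzN1; apply: EC_alN; try lia; cs_tac.
have h4 : K (- KXw) * K (- al a) = K (- al a) * K (- KXw) by apply: KKC.
have h5 : K (- al b) * K (- al a) = K (- al a) * K (- al b) by apply: KKC.
move: h1 h2 h3 h4 h5; rewrite /qbr; nc_solve.
Qed.

Local Notation Fp := (Fm a.+1).
Local Notation P := (EC a.+1 m.+2).
Local Notation W0 := (FC a.+1 m.+2).
Local Notation Kam := (K (- al a)).
Local Notation K1 := (K (- al a.-1)).
Local Notation E1 := (E b.+1).
Local Notation F1 := (Fm a.-1).

Lemma VF1 : F1 * cm (qbr q (P * Kam) W0) Fp = q *: (cm (qbr q (P * Kam) W0) Fp * F1).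
Proof.
have h1 : P * F1 = F1 * P by apply/esym/comm_F_EC; lia.
have h2 : Kam * F1 = q^-1 *: (F1 * Kam).
  by apply: kczE qzN1; apply: F_alN; [lia|]; rewrite /cartan; do ! case: ifP => /= ?; lia.
have h3 : W0 * F1 = F1 * W0 by apply/esym/comm_F_FC; lia.
have h4 : Fp * F1 = F1 * Fp by apply: FFc; lia.
move: h1 h2 h3 h4; rewrite /cm /qbr; nc_solve.
Qed.

Lemma VE1 : E1 * K1 * cm (qbr q (P * Kam) W0) Fp = q *: (cm (qbr q (P * Kam) W0) Fp * (E1 * K1)).
Proof.
have hb1 : (1 <= b.+1 <= n)%N by lia.
have r1 : E1 * P = q *: (P * E1) - q *: EC a.+1 m.+3.
  apply: (qinv_rw hq); rewrite -(ECr (i:=a.+1) (l:=m.+1)); [by []|lia|lia].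
have r2 : E1 * Kam = Kam * E1.
  apply: kc1; apply: kczE qz0; apply: E_alN; [lia|]; rewrite /cartan; do ! case: ifP => /= ?; lia.
have r3 : E1 * W0 = W0 * E1 by apply: comm_E_FC; lia.
have r4 : E1 * Fp = Fp * E1 by apply: EFn; [lia|lia|apply/eqP; lia].
have k1 : K1 * P = 1 *: (P * K1) by apply: kczE qz0; apply: EC_alN; try lia; cs_tac.
have k2 : K1 * EC a.+1 m.+3 = 1 *: (EC a.+1 m.+3 * K1) by apply: kczE qz0; apply: EC_alN; try lia; cs_tac.
have k3 : K1 * Kam = Kam * K1 by apply: KKC.
have k4 : K1 * W0 = 1 *: (W0 * K1) by apply: kczE qz0; apply: FC_alN; try lia; cs_tac.
have k5 : K1 * Fp = 1 *: (Fp * K1).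
  by apply: kczE qz0; apply: F_alN; [lia|]; rewrite /cartan; do ! case: ifP => /= ?; lia.
have k6 : K1 * EC a.+2 m.+2 = 1 *: (EC a.+2 m.+2 * K1) by apply: kczE qz0; apply: EC_alN; try lia; cs_tac.
have k7 : K1 * K (- al a.+1) = K (- al a.+1) * K1 by apply: KKC.
have g1 : EC a.+1 m.+3 * Fp = Fp * EC a.+1 m.+3 - EC a.+2 m.+2 * K (- al a.+1).
  by apply: cm_to; apply: L5; lia.
have g2 : Kam * Fp = q^-1 *: (Fp * Kam).
  by apply: kczE qzN1; apply: F_alN; [lia|]; rewrite /cartan; do ! case: ifP => /= ?; lia.
have g3 : W0 * Fp = q *: (Fp * W0) by apply: (qF_rw hq); apply: FLq; lia.
have g4 : EC a.+2 m.+2 * W0 = W0 * EC a.+2 m.+2 by apply: ORTH; lia.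
have g5 : K (- al a.+1) * W0 = q *: (W0 * K (- al a.+1)) by apply: kczE qz1; apply: FC_alN; try lia; cs_tac.
have g6 : Kam * W0 = q^-1 *: (W0 * Kam) by apply: kczE qzN1; apply: FC_alN; try lia; cs_tac.
have g7 : Kam * EC a.+2 m.+2 = EC a.+2 m.+2 * Kam.
  by apply: kc1'; apply: kczE qz0; apply: EC_alN; try lia; cs_tac.
have g8 : K (- al a.+1) * Kam = Kam * K (- al a.+1) by apply: KKC.
have g9 : EC a.+2 m.+2 * Fp = Fp * EC a.+2 m.+2 by apply/esym/comm_F_EC; lia.
have g10 : K (- al a.+1) * Fp = (q * q) *: (Fp * K (- al a.+1)).
  by apply: kczE qz2; apply: F_alN; [lia|]; rewrite /cartan eqxx.
move: r1 r2 r3 r4 k1 k2 k3 k4 k5 k6 k7 g1 g2 g3 g4 g5 g6 g7 g8 g9 g10; rewrite /cm /qbr; nc_solve.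
Qed.

Local Notation KLX := (K (al a - \sum_(t <- iota a.+1 m.+2) al t)).
Local Notation KAB := (K (- \sum_(t <- iota a m.+3) al t)).

Lemma sum_ab : \sum_(t <- iota a.+1 m.+2) al t = KXw + al b.
Proof. by rewrite (iotaSr a.+1 m.+1) big_cat big_seq1 addSnnS. Qed.
Lemma sum_aab : \sum_(t <- iota a m.+3) al t = al a + \sum_(t <- iota a.+1 m.+2) al t.
Proof. by rewrite /= big_cons. Qed.

Lemma hLr : K (al a - al b) * K (- KXw) = KLX.
Proof. by rewrite KK sum_ab opprD addrAC addrA. Qed.
Lemma hap : K (al a) * K (- KXw) * K (- al b) = KLX.
Proof. by rewrite !KK sum_ab opprD addrA. Qed.
Lemma ham : K (- al a) * K (- KXw) * K (- al b) = KAB.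
Proof. by rewrite !KK sum_aab sum_ab !opprD !addrA. Qed.

Lemma pair_KLX j : (1 <= j <= n)%N ->
  pair_alpha j (al a - \sum_(t <- iota a.+1 m.+2) al t) = cartan a j - csum j a.+1 m.+2.
Proof. by move=> hj; rewrite pairD pairN pair_al // pair_chain. Qed.
Lemma pair_KAB j : (1 <= j <= n)%N -> pair_alpha j (- \sum_(t <- iota a m.+3) al t) = - csum j a m.+3.
Proof. by move=> hj; rewrite pairN pair_chain. Qed.

Lemma goal1 (c : nat -> Fk) (C : Fk) :
  let B1 := Fm a.-1 - c a.-1 *: (E b.+1 * K (- al a.-1)) in
  let Zr := qbr q (Fm a - c a *: (qbr q^-1 (EC a.+1 m.+1) (E b) * K (- al a)))
                (qbr q (FC a.+1 m.+1) (Fm b - c b *: (qbr q^-1 (EM a.+1 m.+1) (E a) * K (- al b)))) in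
  let Y := C *: (qbr q B1 Zr + (q * c b) *: (B1 * K (al a - al b) * K (- KXw))) in
  Y * Fp - Fp * Y = 0.
Proof.
move=> B1 Zr Y.
have hP : qbr q^-1 (EC a.+1 m.+1) (E b) = P by rewrite -(ECr (i:=a.+1) (l:=m)); [by rewrite addSnnS|lia|lia].
have hW : qbr q (FC a.+1 m.+1) (Fm b) = W0 by rewrite -(FCr (i:=a.+1) (l:=m)); [by rewrite addSnnS|lia|lia].
pose Q' := qbr q^-1 (EM a.+1 m.+1) (E a).
pose zFF := qbr q (Fm a) (qbr q (FC a.+1 m.+1) (Fm b)).
pose zFQ := qbr q (Fm a) (qbr q (FC a.+1 m.+1) (Q' * K (- al b))).
pose zPF := qbr q (P * Kam) (qbr q (FC a.+1 m.+1) (Fm b)).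
pose zPQ := qbr q (P * Kam) (qbr q (FC a.+1 m.+1) (Q' * K (- al b))).
pose V := zPF * Fp - Fp * zPF.
have hdec : Zr = zFF - c b *: zFQ - c a *: zPF + (c a * c b) *: zPQ.
  rewrite /Zr hP -/Q' /zFF /zFQ /zPF /zPQ /qbr; nc_solve.
have hKLXF : KLX * Fp = (q * q) *: (Fp * KLX).
  apply: kczE qz2; apply: kcz_eq (kcz_F _ _) _; [lia|]; rewrite pair_KLX; [|lia].
  rewrite /cartan; do ! case: ifP => /= ?; try lia; cs_tac.
have hKABF : KAB * Fp = 1 *: (Fp * KAB).
  apply: kczE qz0; apply: kcz_eq (kcz_F _ _) _; [lia|]; rewrite pair_KAB; [|lia]; cs_tac.
have fzFF : zFF * Fp = Fp * zFF.
  rewrite /zFF hW -FCS; apply/esym/FI; lia.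
have fZFQ : zFQ * Fp = Fp * zFQ - q *: (Fp * KLX).
  rewrite /zFQ /Q' ZFQ.
  move: hap ham hKLXF hKABF; nc_solve.
have fZPQ : zPQ * Fp = Fp * zPQ.
  rewrite /zPQ /Q' Ustep ZPQ.
  have h1 : EC a m.+3 * Fp = Fp * EC a m.+3 by apply: cm0; apply: L3; lia.
  move: h1 ham hKABF; nc_solve.
have fzPF : zPF * Fp = Fp * zPF + V by rewrite /V addrC subrK.
have hZr : Zr * Fp = Fp * Zr + (c b * q) *: (Fp * KLX) - c a *: V.
  rewrite hdec; move: fzFF fZFQ fzPF fZPQ; nc_solve.
have hVB : B1 * V = q *: (V * B1).
  have h1 : F1 * V = q *: (V * F1) by rewrite /V /zPF hW; exact: VF1.
  have h2 : E1 * K1 * V = q *: (V * (E1 * K1)) by rewrite /V /zPF hW; exact: VE1.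
  rewrite /B1; move: h1 h2; nc_solve.
have hBF : B1 * Fp = Fp * B1.
  have h1 : F1 * Fp = Fp * F1 by apply: FFc; lia.
  have h2 : E1 * Fp = Fp * E1 by apply: EFn; [lia|lia|apply/eqP; lia].
  have h3 : K1 * Fp = 1 *: (Fp * K1).
    by apply: kczE qz0; apply: F_alN; [lia|]; rewrite /cartan; do ! case: ifP => /= ?; lia.
  rewrite /B1; move: h1 h2 h3; nc_solve.
have hKB : KLX * B1 = q *: (B1 * KLX).
  have h1 : KLX * F1 = q *: (F1 * KLX).
    apply: kczE qz1; apply: kcz_eq (kcz_F _ _) _; [lia|]; rewrite pair_KLX; [|lia].
    rewrite /cartan; do ! case: ifP => /= ?; try lia; cs_tac.
  have h2 : KLX * E1 = q *: (E1 * KLX).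
    apply: kczE qz1; apply: kcz_eq (kcz_E _ _) _; [lia|]; rewrite pair_KLX; [|lia].
    rewrite /cartan; do ! case: ifP => /= ?; try lia; cs_tac.
  have h3 : KLX * K1 = K1 * KLX by apply: KKC.
  rewrite /B1; move: h1 h2 h3; nc_solve.
rewrite /Y.
clearbody Zr V B1.
move: hZr hVB hBF hKB hKLXF hLr; rewrite /qbr; nc_solve.
Qed.

Lemma goal2 (c : nat -> Fk) (C : Fk) : (1 <= m)%N ->
  let B1 := Fm a.-1 - c a.-1 *: (E b.+1 * K (- al a.-1)) in
  let Zr := qbr q (Fm a - c a *: (qbr q^-1 (EC a.+1 m.+1) (E b) * K (- al a)))
                (qbr q (FC a.+1 m.+1) (Fm b - c b *: (qbr q^-1 (EM a.+1 m.+1) (E a) * K (- al b)))) in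
  let Y := C *: (qbr q B1 Zr + (q * c b) *: (B1 * K (al a - al b) * K (- KXw))) in
  Y * Fm (a + m.+1) - Fm (a + m.+1) * Y = 0.
Proof.
move=> hm B1 Zr Y.
set G := Fm (a + m.+1).
have hG : (1 <= a + m.+1 <= n)%N by lia.
have hP : qbr q^-1 (EC a.+1 m.+1) (E b) = P by rewrite -(ECr (i:=a.+1) (l:=m)); [by rewrite addSnnS|lia|lia].
have hW : qbr q (FC a.+1 m.+1) (Fm b) = W0 by rewrite -(FCr (i:=a.+1) (l:=m)); [by rewrite addSnnS|lia|lia].
pose Q' := qbr q^-1 (EM a.+1 m.+1) (E a).
pose zFF := qbr q (Fm a) (qbr q (FC a.+1 m.+1) (Fm b)).
pose zFQ := qbr q (Fm a) (qbr q (FC a.+1 m.+1) (Q' * K (- al b))).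
pose zPF := qbr q (P * Kam) (qbr q (FC a.+1 m.+1) (Fm b)).
pose zPQ := qbr q (P * Kam) (qbr q (FC a.+1 m.+1) (Q' * K (- al b))).
have hdec : Zr = zFF - c b *: zFQ - c a *: zPF + (c a * c b) *: zPQ.
  rewrite /Zr hP -/Q' /zFF /zFQ /zPF /zPQ /qbr; nc_solve.
have hKLXG : KLX * G = 1 *: (G * KLX).
  apply: kczE qz0; apply: kcz_eq (kcz_F _ _) _; [lia|]; rewrite pair_KLX; [|lia].
  rewrite /cartan; do ! case: ifP => /= ?; try lia; cs_tac.
have hKABG : KAB * G = 1 *: (G * KAB).
  apply: kczE qz0; apply: kcz_eq (kcz_F _ _) _; [lia|]; rewrite pair_KAB; [|lia]; cs_tac.
have fZFF : zFF * G = G * zFF.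
  rewrite /zFF hW -FCS; apply/esym/FI; lia.
have fZFQ : zFQ * G = G * zFQ.
  rewrite /zFQ /Q' ZFQ.
  move: hap ham hKLXG hKABG; nc_solve.
have fZPQ : zPQ * G = G * zPQ.
  rewrite /zPQ /Q' Ustep ZPQ.
  have h1 : EC a m.+3 * G = G * EC a m.+3 by apply: cm0; apply: L3; lia.
  move: h1 ham hKABG; nc_solve.
have fZPF : zPF * G = G * zPF.
  rewrite /zPF hW.
  have h1 : P * G = G * P by apply: cm0; apply: L3; lia.
  have h2 : Kam * G = 1 *: (G * Kam).
    by apply: kczE qz0; apply: F_alN; [lia|]; rewrite /cartan; do ! case: ifP => /= ?; lia.
  have h3 : W0 * G = G * W0 by apply/esym/FI; lia.
  move: h1 h2 h3; rewrite /qbr; nc_solve.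
have hZr : Zr * G = G * Zr.
  rewrite hdec; move: fZFF fZFQ fZPF fZPQ; nc_solve.
have hBG : B1 * G = G * B1.
  have h1 : F1 * G = G * F1 by apply: FFc; lia.
  have h2 : E1 * G = G * E1 by apply: EFn; [lia|lia|apply/eqP; lia].
  have h3 : K1 * G = 1 *: (G * K1).
    by apply: kczE qz0; apply: F_alN; [lia|]; rewrite /cartan; do ! case: ifP => /= ?; lia.
  rewrite /B1; move: h1 h2 h3; nc_solve.
rewrite /Y.
clearbody Zr B1.
move: hZr hBG hKLXG hLr; rewrite /qbr; nc_solve.
Qed.
End Top.
End Uq.


Lemma qfacts (Kf : fieldType) (Fk : fieldType) (iota : {rmorphism Kf -> Fk}) (q : Fk)
  (hq : forall p : {poly Kf}, p != 0 -> (map_poly iota p).[q] != 0) :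
  [/\ q != 0, q * q - 1 != 0 & q * q + 1 != 0].
Proof.
have nz2 : forall c : Kf, ('X^2 + c%:P : {poly Kf}) != 0.
  move=> c; apply/eqP => /(congr1 (fun p : {poly Kf} => p`_2)).
  rewrite coefD coefXn coefC /= addr0 coef0 => /eqP; by rewrite oner_eq0.
split.
- have := hq 'X; rewrite polyX_eq0 map_polyX hornerX; exact.
- have := hq _ (nz2 (-1)); rewrite rmorphD /= map_polyXn map_polyC /= hornerD hornerXn hornerC.
  by rewrite rmorphN rmorph1 expr2.
- have := hq _ (nz2 1); rewrite rmorphD /= map_polyXn map_polyC /= hornerD hornerXn hornerC.
  by rewrite rmorph1 expr2.
Qed.

Theorem lemma4p3
  (Kf : fieldType) (Fk : fieldType) (iota : {rmorphism Kf -> Fk})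
  (hchar : [pchar Kf] =i pred0)
  (q s : Fk) (hs : s ^+ 2 = q)
  (hq : forall p : {poly Kf}, p != 0 -> (map_poly iota p).[q] != 0)
  (n r : nat) (hr2 : (2 <= r)%N) (hrn : (r <= uphalf n - 1)%N)
  (c : nat -> Fk)
  (hcK : forall i, (1 <= i <= n)%N -> ~~ (r < i <= n - r)%N ->
          c i != 0 /\ in_adjoin iota s (c i))
  (hcsq : forall i, (1 <= i <= n)%N -> ~~ (r < i <= n - r)%N ->
          exists d : Fk, d ^+ 2 = c i)
  (hctau : forall i, (1 <= i <= n)%N -> ~~ (r <= i <= n - r + 1)%N ->
          c i = c (tau n i))
  (C : Fk) (hC : C ^+ 2 * (q * c r * c (tau n r)) = 1)
  (A : algType Fk) (E Fm : nat -> A) (K : weight n -> A)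
  (hU : Uq_relations q E Fm K) :
  let Y := Yelt r q E Fm K c C in
  Y * Fm r.+1 - Fm r.+1 * Y = 0 /\ Y * Fm (n - r)%N - Fm (n - r)%N * Y = 0.
Proof.
case: (@qfacts _ _ iota q hq) => hq0 hqq hqp.
have h1 : (r.+1 <= uphalf n)%N by lia.
rewrite geq_uphalf_double -addnn in h1.
pose m := (n - r - r).-1.
have hnm : (n - r - r = m.+1)%N by rewrite /m; lia.
have ht1 : tau n r = (r + m.+2)%N by rewrite /tau /m; lia.
have ht2 : tau n r.-1 = (r + m.+2).+1%N by rewrite /tau /m; lia.
have han : (r + m + 3 <= n)%N by rewrite /m; lia.
have hY : Yelt r q E Fm K c C =
  (let B1 := Fm r.-1 - c r.-1 *: (E (r + m.+2).+1 * K (- alpha n r.-1)) in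
   let Zr := qbr q (Fm r - c r *: (qbr q^-1 (EC q E r.+1 m.+1) (E (r + m.+2)) * K (- alpha n r)))
                (qbr q (FC q Fm r.+1 m.+1) (Fm (r + m.+2) - c (r + m.+2) *:
                   (qbr q^-1 (EM q E r.+1 m.+1) (E r) * K (- alpha n (r + m.+2))))) in
   C *: (qbr q B1 Zr + (q * c (r + m.+2)) *: (B1 * K (alpha n r - alpha n (r + m.+2)) *
          K (- \sum_(t <- seq.iota r.+1 m.+1) alpha n t)))).
  rewrite /Yelt /Bgen /Br /Btr /Kinv /Lr /KXinv /EXp /EXm /FXp /Xlist ht1 ht2 hnm.
  by [].
move=> Y; rewrite /Y hY; split.
  exact: (goal1 hq0 hqq hqp hU hr2 han).
case: (eqVneq m 0) => hm.
  have -> : (n - r = r.+1)%N by move: hnm; rewrite hm; lia.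
  exact: (goal1 hq0 hqq hqp hU hr2 han).
have -> : (n - r = r + m.+1)%N by rewrite /m; lia.
apply: (goal2 hq0 hqq hqp hU hr2 han); lia.
Qed.
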